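(* Let $n\ge1$, $p\in[0,1)$, and let $\mathcal{D}(\rho)=(1-p)\rho+p\,\mathbb{I}/2^n$ be the $n$-qubit global depolarizing channel. Consider Probabilistic Error Cancellation using the optimal quasiprobability decomposition $$\mathcal{D}^{-1}=\Big(1+\frac{(2^{2n}-1)p}{2^{2n}(1-p)}\Big)\mathrm{id}-\sum_{i=1}^{2^{2n}-1}\frac{p}{2^{2n}(1-p)}\mathcal{P}_i,$$ where $\mathcal{P}_i(\rho)=P_i\rho P_i$ ranges over the non-identity $n$-qubit Pauli strings $P_i$, with error mitigation cost $\gamma$ equal to the sum of the squares of the coefficients in this decomposition, and assume perfect correction so that mitigated cost differences equal noise-free cost differences $\Delta C$ while noisy cost differences are $\Delta\widetilde{C}=(1-p)\Delta C$. Then, for any pair of points on the cost landscape with $\Delta C\ne0$, the relative resolvability $\chi_{depol}=\frac{1}{\gamma}\big(\frac{\Delta C}{\Delta\widetilde{C}}\big)^2$ satisfies $$\chi_{depol}=\frac{2^{2n}}{2^{2n}-p(2-p)}\ge1.$$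
   Context: Relative resolvability $\chi=\frac{1}{\gamma}(\Delta C_m/\Delta\widetilde{C})^2$ compares shots needed to resolve two cost values with and without mitigation; $\gamma$ is the error mitigation cost. *)

(* Defs.v *)
From mathcomp Require Import all_boot all_order all_algebra.
Set Implicit Arguments. Unset Strict Implicit. Unset Printing Implicit Defensive.
Import Order.TTheory GRing.Theory Num.Theory.
Local Open Scope ring_scope.

(* n-qubit Pauli strings, labelled by a letter in {I,X,Y,Z} = 'I_4 (0 = I)
   for each of the n qubits. *)
Definition pauli_string (n : nat) := {ffun 'I_n -> 'I_4}.

Definition pauli_id (n : nat) : pauli_string n := [ffun=> ord0].

Definition dim2 (R : ringType) (n : nat) : R := 2 ^+ (2 * n).

Definition pec_coef (R : fieldType) (n : nat) (p : R) (P : pauli_string n) : R :=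
  if P == pauli_id n then
    1 + (dim2 R n - 1) * p / (dim2 R n * (1 - p))
  else - (p / (dim2 R n * (1 - p))).

Definition pec_cost (R : fieldType) (n : nat) (p : R) : R :=
  \sum_(P : pauli_string n) (pec_coef p P) ^+ 2.

Definition rel_resolvability (R : fieldType) (gamma dCm dCnoisy : R) : R :=
  gamma^-1 * (dCm / dCnoisy) ^+ 2.

(* Main.v *)
Require Import Defs.
From mathcomp Require Import all_boot all_order all_algebra.
From mathcomp Require Import ring lra.
Import Order.TTheory GRing.Theory Num.Theory.
Local Open Scope ring_scope.

Lemma cost_eq (R : realFieldType) (n : nat) (p : R) :
  pec_cost n p = (1 + (dim2 R n - 1) * p / (dim2 R n * (1 - p))) ^+ 2
     + (dim2 R n - 1) * (p / (dim2 R n * (1 - p))) ^+ 2.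
Proof.
rewrite /pec_cost (bigD1 (pauli_id n)) //= /pec_coef eqxx; congr (_ + _).
rewrite (eq_bigr (fun _ => (p / (dim2 R n * (1 - p))) ^+ 2)); last first.
  by move=> i /negbTE ->; rewrite sqrrN.
rewrite sumr_const.
set k := (X in _ *+ X)%pattern.
have H : k = (4 ^ n).-1.
  by rewrite /k cardC1 card_ffun !card_ord.
rewrite H -mulr_natl; congr (_ * _); rewrite /dim2 exprM.
have -> : (2:R) ^+ 2 = 4%:R by rewrite expr2 -natrM.
by rewrite -natrX -(prednK (expn_gt0 4 n)) -addn1 natrD /= addrK addn1.
Qed.

Theorem proposition5 (R : realFieldType) (n : nat) (p dC : R) :
  (1 <= n)%N -> 0 <= p -> p < 1 -> dC != 0 ->
  let chi := rel_resolvability (pec_cost n p) dC ((1 - p) * dC) in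
  chi = dim2 R n / (dim2 R n - p * (2 - p)) /\ 1 <= chi.
Proof.
move=> n1 p0 p1 dC0.
have D4 : 4 <= dim2 R n.
  rewrite /dim2 exprM; have -> : (2:R) ^+ 2 = 4 by rewrite expr2; lra.
  case: n n1 => // m _; rewrite exprS.
  have : 1 <= (4:R) ^+ m by apply: exprn_ege1; lra.
  move=> h; nra.
have q0 : 1 - p != 0 by rewrite subr_eq0 eq_sym lt_eqF.
have D0 : dim2 R n != 0 by rewrite gt_eqF //; lra.
have E0 : dim2 R n - p * (2 - p) != 0 by rewrite gt_eqF //; nra.
move=> chi.
have Hchi : chi = dim2 R n / (dim2 R n - p * (2 - p)).
  rewrite /chi /rel_resolvability cost_eq.
  set D := dim2 R n in D0 E0 *.
  have -> : dC / ((1 - p) * dC) = (1 - p)^-1 by field; rewrite q0 dC0.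
  have -> : (1 + (D - 1) * p / (D * (1 - p))) ^+ 2 +
    (D - 1) * (p / (D * (1 - p))) ^+ 2 = (D - p * (2 - p)) / (D * (1-p)^+2).
    by field; rewrite D0 q0.
  by field; rewrite D0 q0 E0.
split=> //; rewrite Hchi ler_pdivlMr; last by nra.
rewrite mul1r; nra.
Qed.
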